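(* Let $(x_n)_{n \geq 1}$ be a sequence of vectors with $x_n$ on the complex unit sphere of $\mathbb{C}^n$ for all $n$. Then there exists a unique virtual isometry $(u_n)_{n \geq 1}$ such that $u_n(e_n) = x_n$ for all $n \geq 1$, and it is given by $u_n = r_n r_{n-1}\cdots r_1$, where for $j \in \{1,\dots,n\}$, $r_j = \mathrm{Id}$ if $x_j = e_j$, and otherwise $r_j$ is the unique reflection (unitary operator $r$ with $r-\mathrm{Id}$ of rank one, acting on $\mathbb{C}^j$ and fixing $e_k$ for $k>j$) such that $r_j(e_j) = x_j$. Moreover, if $x_n = e_{i_n}$ with $i_n \in \{1,\dots,n\}$ for all $n$, then $(u_n)_{n\ge1}$ is the sequence of permutation matrices (with $u_n e_j = e_{\sigma_n(j)}$) of the virtual permutation $(\sigma_n)_{n\ge1}$ given by $\sigma_n = \tau_{n,i_n}\tau_{n-1,i_{n-1}}\cdots\tau_{1,i_1}$, where $\tau_{j,k} = \mathrm{Id}$ if $j = k$ and $\tau_{j,k}$ is the transposition $(j,k)$ if $j \neq k$.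
   Context: Let $(e_k)$ be the canonical basis of $\ell^2$; identify $\mathbb{C}^n$ with the span of $e_1,\dots,e_n$ and $U(n)$ with the unitary operators fixing every $e_k$, $k>n$. For $n\ge m\ge1$ and $u\in U(n)$, $\pi_{n,m}(u)$ is the unique $v\in U(m)$ such that the range of $u-v$ is contained in $(u-\mathrm{Id})(\mathrm{span}\{e_k:k>m\})$ (existence and uniqueness are known). A virtual isometry is a sequence $(u_n)_{n\ge1}$ with $u_n\in U(n)$ and $\pi_{n+1,n}(u_{n+1})=u_n$ for all $n\ge1$. A virtual permutation is a sequence $(\sigma_n)$, $\sigma_n\in\mathcal{S}_n$, such that for $n\ge m$, $\sigma_m$ is obtained from $\sigma_n$ by deleting $m+1,\dots,n$ from its cycle structure. *)

(* Defs.v *)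
From HB Require Import structures.
From mathcomp Require Import all_boot all_order all_algebra all_fingroup.
From mathcomp Require Import spectral.
From mathcomp Require Import reals.
From mathcomp Require Import complex.



Unset Printing Implicit Defensive.

Import Order.TTheory GRing.Theory Num.Theory.
Local Open Scope ring_scope.

(* Conventions.
   - The scalars are C := R[i] = complex R for R : realType (i.e. the complex
     numbers).
   - An operator on l^2 fixing every e_k, k > n, is represented by its n x n
     matrix on C^n = span(e_1,...,e_n) (column-vector convention: the operator
     acts by x |-> A *m x).  Matrix indices are 0-based: the ordinal i : 'I_n
     stands for the basis vector e_(i+1).
   - U(n) = n x n unitary matrices ([unitarymx] from mathcomp's spectral.v). *)

Section Defs.
Context {R : realType}.
Local Notation C := (R[i]).

(* the (1-based) canonical basis vector e_k of C^n *)
Definition evec (n k : nat) : 'cV[C]_n := \col_(i < n) ((i.+1 == k)%:R).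

Definition unit_sphere (n : nat) (x : 'cV[C]_n) : Prop :=
  \sum_(i < n) `|x i 0| ^+ 2 = 1.

(* entry (i,j) (0-based, natural numbers) of the infinite matrix of the
   operator on l^2 given by A : 'M_m (identity outside C^m) *)
Definition mxnat (m : nat) (A : 'M[C]_m) (i j : nat) : C :=
  match @insub _ (fun k => k < m)%N 'I_m i, @insub _ (fun k => k < m)%N 'I_m j with
  | Some i', Some j' => A i' j'
  | _, _ => (i == j)%:R
  end.

Definition embed (n m : nat) (A : 'M[C]_m) : 'M[C]_n :=
  \matrix_(i < n, j < n) mxnat m A i j.

(* is_pi n m u v :  v = pi_{n,m}(u), i.e. v in U(m) and the range of u - v is
   contained in (u - Id)(span{e_k : k > m}).  All operators fix e_k for k > n,
   so everything takes place in C^n; the vectors of span{e_k : k > m} inside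
   C^n are those whose 0-based coordinates i < m vanish. *)
Definition is_pi (n m : nat) (u : 'M[C]_n) (v : 'M[C]_m) : Prop :=
  v \is unitarymx /\
  forall y : 'cV[C]_n, exists z : 'cV[C]_n,
    (forall i : 'I_n, (i < m)%N -> z i 0 = 0) /\
    (u - embed n m v) *m y = (u - 1%:M) *m z.

Definition virtual_isometry (u : forall n : nat, 'M[C]_n) : Prop :=
  (forall n, (1 <= n)%N -> u n \is unitarymx) /\
  (forall n, (1 <= n)%N -> is_pi n.+1 n (u n.+1) (u n)).

Definition reflection (j : nat) (r : 'M[C]_j) : Prop :=
  r \is unitarymx /\ \rank (r - 1%:M) = 1%N.

Definition refl_spec (x : forall n : nat, 'cV[C]_n) (j : nat) (r : 'M[C]_j)
  : Prop :=
  (x j = evec j j -> r = 1%:M) /\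
  (x j <> evec j j -> reflection j r /\ r *m evec j j = x j).

Definition refl_prod (r : forall j : nat, 'M[C]_j) (n : nat) : 'M[C]_n :=
  \prod_(j <- rev (iota 1 n)) embed n j (r j).

Definition pmx (n : nat) (s : 'S_n) : 'M[C]_n :=
  \matrix_(a < n, b < n) ((a == s b)%:R).

End Defs.

Definition permnat (n : nat) (s : 'S_n) (j : nat) : nat :=
  match @insub _ (fun k => k < n)%N 'I_n j with
  | Some j' => val (s j')
  | None => j
  end.

(* s' in S_m is obtained from s in S_n (m <= n) by deleting m+1,...,n from
   its cycle structure: s'(j) is the first iterate s^t(j), t >= 1, lying in
   {1..m}. *)
Definition delete_cycles (n m : nat) (s : 'S_n) (s' : 'S_m) : Prop :=
  forall j : 'I_m, exists t : nat,
    (1 <= t)%N /\ iter t (permnat n s) j = val (s' j) /\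
    (forall t', (1 <= t')%N -> (t' < t)%N -> (m <= iter t' (permnat n s) j)%N).

Definition virtual_permutation (sigma : forall n : nat, 'S_n) : Prop :=
  forall n m, (1 <= m)%N -> (m <= n)%N -> delete_cycles n m (sigma n) (sigma m).

Definition tau (n j k : nat) : 'S_n :=
  match @insub _ (fun l => l < n)%N 'I_n j.-1,
        @insub _ (fun l => l < n)%N 'I_n k.-1 with
  | Some a, Some b => tperm a b
  | _, _ => 1%g
  end.

(* sigma_n = tau_{n,i_n} o ... o tau_{1,i_1} (as maps: tau_{1,i_1} applied
   first).  Note that in mathcomp (s * t)%g x = t (s x) (lemma permM), hence
   the product is written in the order tau_1 * ... * tau_n. *)
Definition sigma_of (i : nat -> nat) (n : nat) : 'S_n :=
  (\prod_(j <- iota 1 n) tau n j (i j))%g.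

(* Main.v *)
Require Import Defs.
From HB Require Import structures.
From mathcomp Require Import all_boot all_order all_algebra all_fingroup.
From mathcomp Require Import spectral reals complex.
From mathcomp Require Import ring.
Import Order.TTheory GRing.Theory Num.Theory.
Local Open Scope ring_scope.

Section PartA.

Section Emb.
Context {R : realType}.
Local Notation C := (R[i]).

Lemma mxnat_in {m} (A : 'M[C]_m) (i j : 'I_m) : mxnat m A i j = A i j.
Proof.
rewrite /mxnat (insubT (fun k => k < m)%N (ltn_ord i)) (insubT (fun k => k < m)%N (ltn_ord j)).
by congr (A _ _); apply: val_inj.
Qed.

Lemma mxnat_out {m} (A : 'M[C]_m) (i j : nat) : ~~ ((i < m) && (j < m))%N ->
  mxnat m A i j = (i == j)%:R.
Proof.
rewrite negb_and => h; rewrite /mxnat.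
by case/orP: h => /negbTE h; rewrite (@insubF _ (fun k => k < m)%N (ordinal m) _ h) //; case: insub.
Qed.

Lemma mxnat_inn {m} (A : 'M[C]_m) {i j : nat} (hi : (i < m)%N) (hj : (j < m)%N) :
  mxnat m A i j = A (Ordinal hi) (Ordinal hj).
Proof. by rewrite -(mxnat_in A (Ordinal hi)). Qed.

Lemma embedE N m (A : 'M[C]_m) (i j : 'I_N) : embed N m A i j = mxnat m A i j.
Proof. by rewrite mxE. Qed.

Lemma sum_delta N (F : nat -> C) (c : nat) :
  \sum_(k < N) F k * (k == c :> nat)%:R = if (c < N)%N then F c else 0.
Proof.
elim: N => [|N IH]; first by rewrite big_ord0.
rewrite big_ord_recr /= IH.
case: (ltngtP c N) => h.
- by rewrite mulr0n mulr0 addr0 ltnS (ltnW h).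
- by rewrite mulr0n mulr0 addr0 ltnS leqNgt h.
- by rewrite mulr1n mulr1 add0r h ltnSn.
Qed.

Lemma sum_deltaC N (F : nat -> C) (c : nat) :
  \sum_(k < N) (c == k :> nat)%:R * F k = if (c < N)%N then F c else 0.
Proof. by rewrite -sum_delta; apply: eq_bigr => k _; rewrite mulrC eq_sym. Qed.

Lemma mxnatM N m (A B : 'M[C]_m) (i j : nat) : (m <= N)%N -> (i < N)%N -> (j < N)%N ->
  mxnat m (A *m B) i j = \sum_(k < N) mxnat m A i k * mxnat m B k j.
Proof.
move=> hm hi hj.
case: (boolP (i < m)%N) => him; last first.
  rewrite mxnat_out ?(negbTE him) //.
  rewrite (eq_bigr (fun k : 'I_N => (i == k :> nat)%:R * mxnat m B k j)); last first.
    by move=> k _; rewrite mxnat_out ?(negbTE him).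
  rewrite (sum_deltaC N (fun k => mxnat m B k j)) hi mxnat_out //.
  by rewrite (negbTE him).
case: (boolP (j < m)%N) => hjm; last first.
  rewrite mxnat_out ?(negbTE hjm) ?andbF //.
  rewrite (eq_bigr (fun k : 'I_N => mxnat m A i k * (k == j :> nat)%:R)); last first.
    by move=> k _; rewrite (mxnat_out B) ?(negbTE hjm) ?andbF.
  rewrite (sum_delta N (fun k => mxnat m A i k)) hj mxnat_out ?(negbTE hjm) ?andbF //.
rewrite (mxnat_inn _ him hjm) mxE.
rewrite (bigID (fun k : 'I_N => (k < m)%N)) /=.
rewrite [X in _ = _ + X]big1 ?addr0; last first.
  move=> k hk; rewrite mxnat_out ?(negbTE hk) ?andbF //.
  have -> : (i == k) = false by apply/negbTE; apply: contraNneq hk => <-.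
  by rewrite mul0r.
rewrite -(big_ord_widen _ (fun k => mxnat m A i k * mxnat m B k j) hm).
apply: eq_bigr => k _.
by rewrite -(mxnat_in A) -(mxnat_in B).
Qed.

Lemma embedM N m (A B : 'M[C]_m) : (m <= N)%N ->
  embed N m (A *m B) = embed N m A *m embed N m B.
Proof.
move=> hm; apply/matrixP => i j; rewrite !mxE (mxnatM N _ A B i j hm) //.
by apply: eq_bigr => k _; rewrite !mxE.
Qed.

Lemma mxnat1 m (i j : nat) : mxnat m (1%:M : 'M[C]_m) i j = (i == j)%:R.
Proof.
case: (boolP ((i < m) && (j < m))%N) => h; last by rewrite mxnat_out.
case/andP: h => hi hj; rewrite (mxnat_inn _ hi hj) mxE.
by case: eqP => [[->]|h]; [rewrite eqxx | case: eqP => // hh; case: h; apply: val_inj].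
Qed.

Lemma embed1 N m : embed N m (1%:M : 'M[C]_m) = 1%:M.
Proof.
apply/matrixP => i j; rewrite !mxE mxnat1.
by case: (i =P j) => [->|h]; [rewrite eqxx | case: eqP => // hh; case: h; apply: val_inj].
Qed.

Lemma embed_id N (A : 'M[C]_N) : embed N N A = A.
Proof. by apply/matrixP => i j; rewrite mxE mxnat_in. Qed.

Lemma embed_trans N m j (A : 'M[C]_j) : (j <= m)%N ->
  embed N m (embed m j A) = embed N j A.
Proof.
move=> hjm; apply/matrixP => a b; rewrite !mxE.
case: (boolP ((a < m) && (b < m))%N) => h; last first.
  rewrite mxnat_out // mxnat_out //; apply: contra h => /andP[h1 h2].
  by rewrite (leq_trans h1 hjm) (leq_trans h2 hjm).
case/andP: h => ha hb; rewrite (mxnat_inn _ ha hb) mxE //.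
Qed.

Open Scope sesquilinear_scope.

Lemma mxnat_tr {m} (A : 'M[C]_m) i j : mxnat m (A ^t*) i j = (mxnat m A j i)^*.
Proof.
case: (boolP ((i < m) && (j < m))%N) => h.
  by case/andP: h => hi hj; rewrite (mxnat_inn _ hi hj) (mxnat_inn _ hj hi) !mxE.
rewrite !mxnat_out ?conjC_nat 1?eq_sym //.
by rewrite andbC.
Qed.

Lemma embed_tr N m (A : 'M[C]_m) : embed N m (A ^t*) = (embed N m A) ^t*.
Proof. by apply/matrixP => i j; rewrite !mxE mxnat_tr. Qed.

Lemma embed_unitary N m (A : 'M[C]_m) : (m <= N)%N -> A \is unitarymx ->
  embed N m A \is unitarymx.
Proof.
move=> hm /unitarymxP hA; apply/unitarymxP.
by rewrite -embed_tr -embedM // hA embed1.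
Qed.

End Emb.

End PartA.

Section PartB.
Open Scope sesquilinear_scope.

Section Refl.
Context {R : realType}.
Local Notation C := (R[i]).

Lemma ctM m n p (A : 'M[C]_(m,n)) (B : 'M[C]_(n,p)) : (A *m B)^t* = B^t* *m A^t*.
Proof. by rewrite trmx_mul map_mxM. Qed.
Lemma ctD m n (A B : 'M[C]_(m,n)) : (A + B)^t* = A^t* + B^t*.
Proof. by apply/matrixP=> i j; rewrite !mxE rmorphD. Qed.
Lemma ctN m n (A : 'M[C]_(m,n)) : (- A)^t* = - A^t*.
Proof. by apply/matrixP=> i j; rewrite !mxE rmorphN. Qed.
Lemma ctB m n (A B : 'M[C]_(m,n)) : (A - B)^t* = A^t* - B^t*.
Proof. by rewrite ctD ctN. Qed.
Lemma ctZ m n a (A : 'M[C]_(m,n)) : (a *: A)^t* = a^* *: A^t*.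
Proof. by apply/matrixP=> i j; rewrite !mxE rmorphM. Qed.
Lemma ctS n a : (a%:M : 'M[C]_n)^t* = a^*%:M.
Proof. by apply/matrixP=> i j; rewrite !mxE eq_sym; case: eqP => _; rewrite ?mulr1n ?mulr0n ?conjC0. Qed.
Lemma ct1 n : (1%:M : 'M[C]_n)^t* = 1%:M.
Proof. by rewrite ctS conjC1. Qed.

Lemma cv_norm0 n (v : 'cV[C]_n) : v^t* *m v = 0 -> v = 0.
Proof.
move=> h; have h0 : \sum_(k < n) `|v k 0| ^+ 2 = (v^t* *m v) 0 0.
  by rewrite mxE; apply: eq_bigr => k _; rewrite !mxE normCK mulrC.
rewrite h mxE in h0.
apply/matrixP => k j; rewrite (ord1 j) mxE.
have := (@psumr_eq0P _ _ predT _ (fun k _ => exprn_ge0 2 (normr_ge0 (v k 0))) h0 k).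
by move=> /(_ isT) /eqP; rewrite expf_eq0 /= normr_eq0 => /eqP.
Qed.


Lemma ctK m n (A : 'M[C]_(m,n)) : A^t*^t* = A.
Proof. exact: trmxCK. Qed.

Lemma key_unique n (e x : 'cV[C]_n) (g1 g2 : 'rV[C]_n) :
  (1%:M + (x - e) *m g1) \is unitarymx -> (1%:M + (x - e) *m g1) *m e = x ->
  (1%:M + (x - e) *m g2) \is unitarymx -> (1%:M + (x - e) *m g2) *m e = x ->
  (x - e) *m g1 = (x - e) *m g2.
Proof.
set d := x - e.
have H : forall g : 'rV[C]_n, (1%:M + d *m g) \is unitarymx -> (1%:M + d *m g) *m e = x ->
    g^t* *m (d^t* *m x) = - d.
  move=> g /unitarymxP/mulmx1C hu he.
  have : (1%:M + d *m g)^t* *m x = e by rewrite -he mulmxA hu mul1mx.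
  rewrite ctD ct1 ctM mulmxDl mul1mx -mulmxA => h.
  by apply: (addrI x); rewrite h /d opprB addrC subrK.
move=> u1 e1 u2 e2.
have h1 := H g1 u1 e1; have h2 := H g2 u2 e2.
case: (eqVneq d 0) => hd; first by rewrite hd !mul0mx.
rewrite [d^t* *m x]mx11_scalar !mul_mx_scalar in h1 h2.
set s := (d^t* *m x) 0 0 in h1 h2.
have hs : s != 0.
  apply: contra_neq hd => hs0; move: h1; rewrite hs0 scale0r => /eqP.
  by rewrite eq_sym oppr_eq0 => /eqP.
have : g1^t* = g2^t* by apply: (scalerI hs); rewrite h1 h2.
by move/(congr1 (fun A => A^t*)); rewrite !ctK => ->.
Qed.

Section ReflN.
Context {n : nat}.
Local Notation e := (@evec R n n).

Definition dv (x : 'cV[C]_n) := x - e.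
Definition ac (x : 'cV[C]_n) := (e^t* *m x) 0 0.
Definition refl (x : 'cV[C]_n) : 'M[C]_n :=
  1%:M - (1 - (ac x)^*)^-1 *: (dv x *m (dv x)^t*).

Lemma evec_ee : (0 < n)%N -> e^t* *m e = 1%:M.
Proof.
move=> hn; apply/matrixP => i j; rewrite (ord1 i) (ord1 j) !mxE.
rewrite (eq_bigr (fun k : 'I_n => (k.+1 == n)%:R * (k == n.-1 :> nat)%:R)); last first.
  move=> k _; rewrite !mxE conjC_nat; congr (_ * _%:R).
  by rewrite -[in RHS]eqSS prednK.
by rewrite (sum_delta _ (fun k => (k.+1 == n)%:R)) prednK // eqxx leqnn.
Qed.

Lemma x_norm (x : 'cV[C]_n) : unit_sphere n x -> x^t* *m x = 1%:M.
Proof.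
move=> hx; apply/matrixP => i j; rewrite (ord1 i) (ord1 j) !mxE -hx.
by apply: eq_bigr => k _; rewrite !mxE normCK mulrC.
Qed.

Lemma ex_scal (x : 'cV[C]_n) : e^t* *m x = (ac x)%:M.
Proof. exact: mx11_scalar. Qed.

Lemma xe_scal (x : 'cV[C]_n) : x^t* *m e = ((ac x)^*)%:M.
Proof. by rewrite -ctS -ex_scal ctM ctK. Qed.

Lemma dd_scal (x : 'cV[C]_n) : (0 < n)%N -> unit_sphere n x ->
  (dv x)^t* *m dv x = (2 - ac x - (ac x)^*)%:M.
Proof.
move=> hn hx; rewrite /dv ctB mulmxBl !mulmxBr x_norm // xe_scal ex_scal evec_ee //.
apply/matrixP => i j; rewrite !mxE; case: (i == j) => /=; ring.
Qed.

Lemma de_scal (x : 'cV[C]_n) : (0 < n)%N -> (dv x)^t* *m e = ((ac x)^* - 1)%:M.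
Proof.
move=> hn; rewrite /dv ctB mulmxBl xe_scal evec_ee //.
apply/matrixP => i j; rewrite !mxE; case: (i == j) => /=; ring.
Qed.

Lemma ac1 (x : 'cV[C]_n) : (0 < n)%N -> unit_sphere n x -> ac x = 1 -> x = e.
Proof.
move=> hn hx ha; have : (dv x)^t* *m dv x = 0.
  rewrite dd_scal // ha conjC1; apply/matrixP => i j; rewrite !mxE; case: (i == j) => /=; ring.
by move/cv_norm0 => /eqP; rewrite subr_eq0 => /eqP.
Qed.

Lemma refl_form (x : 'cV[C]_n) :
  refl x = 1%:M + dv x *m (- (1 - (ac x)^*)^-1 *: (dv x)^t*).
Proof. by rewrite /refl -scalemxAr scaleNr. Qed.

Lemma refl_e (x : 'cV[C]_n) : (0 < n)%N -> unit_sphere n x -> refl x *m e = x.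
Proof.
move=> hn hx; case: (eqVneq (ac x) 1) => ha.
  have hxe := ac1 x hn hx ha.
  by rewrite /refl /dv hxe subrr mul0mx scaler0 subr0 mul1mx.
rewrite /refl mulmxBl mul1mx -scalemxAl -mulmxA de_scal // mul_mx_scalar scalerA.
have hk : (1 - (ac x)^*)^-1 * ((ac x)^* - 1) = -1.
  have hz : 1 - (ac x)^* != 0.
    by rewrite subr_eq0; apply: contra ha => /eqP h; rewrite -[ac x]conjCK -h conjC1.
  by field.
by rewrite hk scaleN1r opprK /dv addrC subrK.
Qed.


Lemma ac_ne1 (x : 'cV[C]_n) : (0 < n)%N -> unit_sphere n x -> x != e -> 1 - (ac x)^* != 0.
Proof.
move=> hn hx hxe; rewrite subr_eq0; apply: contra hxe => /eqP h.
by apply/eqP; apply: ac1 => //; rewrite -[ac x]conjCK -h conjC1.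
Qed.

Lemma refl_xe (x : 'cV[C]_n) : x = e -> refl x = 1%:M.
Proof. by move=> ->; rewrite /refl /dv subrr mul0mx scaler0 subr0. Qed.

Lemma refl_unitary (x : 'cV[C]_n) : (0 < n)%N -> unit_sphere n x -> refl x \is unitarymx.
Proof.
move=> hn hx; case: (eqVneq x e) => hxe.
  by rewrite refl_xe //; apply/unitarymxP; rewrite ct1 mulmx1.
have hz := ac_ne1 x hn hx hxe.
have hz' : 1 - ac x != 0.
  by apply: contraNneq hz => h; rewrite -conjC1 -rmorphB h rmorph0.
apply/unitarymxP.
set k := (1 - (ac x)^*)^-1; set P := dv x *m (dv x)^t*.
have hP : P^t* = P by rewrite /P ctM ctK.
have hPP : P *m P = (2 - ac x - (ac x)^*) *: P.
  by rewrite /P mulmxA -[dv x *m _ *m _]mulmxA dd_scal // mul_mx_scalar -scalemxAl.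
rewrite /refl -/k -/P ctB ct1 ctZ hP mulmxBl mul1mx !mulmxBr mulmx1.
rewrite -!scalemxAl -!scalemxAr hPP !scalerA.
have hk : k^* = (1 - ac x)^-1.
  by rewrite /k fmorphV rmorphB rmorph1 /= conjCK.
have hs : k * k^* * (2 - ac x - (ac x)^*) = k^* + k.
  by rewrite hk /k; field; apply/andP; split.
rewrite hs; apply/matrixP => i j; rewrite !mxE; ring.
Qed.

Lemma refl_rank (x : 'cV[C]_n) : (0 < n)%N -> unit_sphere n x -> x != e ->
  \rank (refl x - 1%:M) = 1%N.
Proof.
move=> hn hx hxe; have hz := ac_ne1 x hn hx hxe.
rewrite /refl addrC addKr mxrank_opp mxrank_scale_nz ?invr_eq0 //.
apply/eqP; rewrite eqn_leq (leq_trans (mxrankM_maxr _ _)) ?rank_leq_row //.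
rewrite lt0n mxrank_eq0; apply/eqP => h0.
have : dv x *m ((dv x)^t* *m e) = 0 by rewrite mulmxA h0 mul0mx.
rewrite de_scal // mul_mx_scalar => /eqP; rewrite scalemx_eq0 => /orP[].
  rewrite subr_eq0 => /eqP h; move/negP: hz; apply; rewrite -h subrr.
  done.
by rewrite /dv subr_eq0 (negbTE hxe).
Qed.

Lemma refl_spec_ok (x : 'cV[C]_n) : (0 < n)%N -> unit_sphere n x ->
  (x = e -> refl x = 1%:M) /\ (x <> e -> reflection n (refl x) /\ refl x *m e = x).
Proof.
move=> hn hx; split; first exact: refl_xe.
move=> /eqP hxe; split; last exact: refl_e.
by split; [exact: refl_unitary | exact: refl_rank].
Qed.

Lemma refl_uniq (x : 'cV[C]_n) (r : 'M[C]_n) : (0 < n)%N -> unit_sphere n x -> x != e ->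
  reflection n r -> r *m e = x -> r = refl x.
Proof.
move=> hn hx hxe [ru rr] re.
set A := r - 1%:M.
have hAe : A *m e = dv x by rewrite /A mulmxBl mul1mx re.
have hd : dv x != 0 by rewrite /dv subr_eq0.
have hsub : ((dv x)^T <= A^T)%MS by rewrite -hAe trmx_mul submxMl.
have hrd : \rank (dv x)^T = 1%N.
  apply/eqP; rewrite eqn_leq rank_leq_row lt0n mxrank_eq0.
  by apply: contra hd => /eqP h; rewrite -[dv x]trmxK h trmx0.
have : (A^T <= (dv x)^T)%MS.
  by rewrite -(mxrank_leqif_sup hsub).2 hrd mxrank_tr rr.
case/submxP => D hD.
have hr : r = 1%:M + dv x *m D^T.
  by rewrite -[dv x]trmxK -trmx_mul -hD trmxK /A addrC subrK.
have := @key_unique n e x (D^T) (- (1 - (ac x)^*)^-1 *: (dv x)^t*).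
rewrite -/(dv x) -hr -refl_form => /(_ ru re (refl_unitary x hn hx) (refl_e x hn hx)).
by rewrite hr refl_form => ->.
Qed.

End ReflN.

End Refl.

End PartB.

Section PartC.
Open Scope sesquilinear_scope.

Section VI.
Context {R : realType}.
Local Notation C := (R[i]).

Lemma iota1S n : iota 1 n.+1 = rcons (iota 1 n) n.+1.
Proof. by rewrite -[in LHS](addn1 n) iotaD cats1 add1n. Qed.

Lemma refl_prod0 (r : forall j : nat, 'M[C]_j) : refl_prod r 0 = 1%:M.
Proof. by rewrite /refl_prod /= big_nil. Qed.

Lemma refl_prodS (r : forall j : nat, 'M[C]_j) n :
  refl_prod r n.+1 = r n.+1 *m embed n.+1 n (refl_prod r n).
Proof.
rewrite /refl_prod iota1S rev_rcons big_cons embed_id mulmxE; congr (_ * _).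
rewrite (big_morph (embed n.+1 n) (op1 := *%R) (id1 := 1%:M)); last 2 first.
- by move=> A B; rewrite -!mulmxE embedM.
- exact: embed1.
apply: eq_big_seq => j; rewrite mem_rev mem_iota => /andP[_ hj].
by rewrite embed_trans // -ltnS -(add1n n).
Qed.

Lemma embed_e n (A : 'M[C]_n) : embed n.+1 n A *m evec n.+1 n.+1 = evec n.+1 n.+1.
Proof.
apply/matrixP => i j; rewrite (ord1 j) !mxE.
rewrite (eq_bigr (fun k : 'I_n.+1 => mxnat n A i k * (k == n :> nat)%:R)); last first.
  by move=> k _; rewrite !mxE eqSS.
rewrite (sum_delta _ (fun k => mxnat n A i k)) ltnSn eqSS mxnat_out //.
by rewrite ltnn andbF.
Qed.

Variable x : forall n : nat, 'cV[C]_n.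
Hypothesis hx : forall n : nat, (1 <= n)%N -> unit_sphere n (x n).

Definition Rf (j : nat) : 'M[C]_j := refl (x j).
Definition U n := refl_prod Rf n.

Lemma U_unitary n : U n \is unitarymx.
Proof.
elim: n => [|n IH].
  by rewrite /U refl_prod0; apply/unitarymxP; rewrite ct1 mulmx1.
rewrite /U refl_prodS; apply: mul_unitarymx.
  by apply: refl_unitary => //; apply: hx.
exact: embed_unitary.
Qed.

Lemma U_e n : (1 <= n)%N -> U n *m evec n n = x n.
Proof.
case: n => // n _; rewrite /U refl_prodS -mulmxA embed_e.
by apply: refl_e => //; apply: hx.
Qed.

Lemma U_pi n : is_pi n.+1 n (U n.+1) (U n).
Proof.
split; first exact: U_unitary.
move=> y.
set e := (evec n.+1 n.+1 : 'cV[C]_n.+1).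
set E := embed n.+1 n (U n).
set g := - (1 - (ac (x n.+1))^*)^-1 *: (dv (x n.+1))^t*.
have hR : Rf n.+1 = 1%:M + dv (x n.+1) *m g by rewrite /Rf refl_form.
have hU : U n.+1 = Rf n.+1 *m E by rewrite /U refl_prodS.
exists (e *m (g *m E *m y)); split.
  move=> i hi; rewrite mxE big1 // => k _; rewrite !mxE.
  by rewrite (_ : (i.+1 == n.+1) = false) ?mul0r // eqSS ltn_eqF.
have hUe : (U n.+1 - 1%:M) *m e = dv (x n.+1).
  by rewrite mulmxBl mul1mx U_e.
by rewrite [RHS]mulmxA hUe hU hR mulmxDl mul1mx addrC addKr !mulmxA.
Qed.

Lemma evec11 : evec 1 1 = (1%:M : 'M[C]_1).
Proof. by apply/matrixP => i j; rewrite (ord1 i) (ord1 j) !mxE. Qed.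

Lemma U_unique (w : forall n : nat, 'M[C]_n) :
  virtual_isometry w -> (forall n : nat, (1 <= n)%N -> w n *m evec n n = x n) ->
  forall n : nat, (1 <= n)%N -> w n = U n.
Proof.
move=> [wu wpi] we; elim=> // n IH _.
case: n IH => [_|n IH].
  by rewrite -[w 1]mulmx1 -[U 1]mulmx1 -evec11 we // U_e.
have {}IH := IH isT.
set N := n.+1.
set e := (evec N.+1 N.+1 : 'cV[C]_N.+1).
set E := embed N.+1 N (U N).
set W := w N.+1.
set d := x N.+1 - e.
have hWe : (W - 1%:M) *m e = d by rewrite mulmxBl mul1mx /W we.
have col : forall j : 'I_N.+1, exists c : C, (W - E) *m delta_mx j 0 == c *: d.
  move=> j; have [z [hz0 hz]] := (wpi N isT).2 (delta_mx j 0).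
  rewrite IH -/E -/W in hz.
  exists (z ord_max 0); rewrite hz; apply/eqP.
  have hze : z = z ord_max 0 *: e.
    apply/matrixP => i k; rewrite (ord1 k) !mxE.
    case: (ltnP i N) => hi; first by rewrite hz0 // (_ : (i.+1 == N.+1) = false) ?mulr0 // eqSS ltn_eqF.
    have -> : i = ord_max by apply: val_inj; apply/eqP; rewrite eqn_leq hi -ltnS ltn_ord.
    by rewrite eqxx mulr1.
  by rewrite {1}hze -scalemxAr hWe.
set gam := \row_(j < N.+1) xchoose (col j).
have hWE : W = E + d *m gam.
  apply/eqP; rewrite -subr_eq0 opprD addrA -/(W - E) subr_eq0; apply/eqP.
  apply/matrixP => i j.
  have := xchooseP (col j); move/eqP/matrixP => /(_ i 0).
  rewrite !mxE => h.
  rewrite (bigD1 ord0) //= big1 ?addr0 ?(ord1) /=; last by move=> k; rewrite (ord1 k) eqxx.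
  rewrite !mxE mulrC -h.
  rewrite (bigD1 j) //= big1 ?addr0; first by rewrite !mxE eqxx /= mulr1.
  by move=> k hk; rewrite !mxE (negbTE hk) mulr0.
have EU : E \is unitarymx by apply: embed_unitary => //; exact: U_unitary.
have Etr : E^t* *m e = e by rewrite /E -embed_tr embed_e.
set M := W *m E^t*.
have hM : M = 1%:M + d *m (gam *m E^t*).
  by rewrite /M hWE mulmxDl (unitarymxP EU) mulmxA.
have Mu : M \is unitarymx by apply: mul_unitarymx; [exact: wu | rewrite trmxC_unitary].
have Me : M *m e = x N.+1 by rewrite /M -mulmxA Etr /W we.
have hRf : Rf N.+1 = 1%:M + d *m (- (1 - (ac (x N.+1))^*)^-1 *: (dv (x N.+1))^t*).
  by rewrite /Rf refl_form.
have Ru : Rf N.+1 \is unitarymx by apply: refl_unitary => //; apply: hx.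
have Re : Rf N.+1 *m e = x N.+1 by apply: refl_e => //; apply: hx.
have := @key_unique _ _ e (x N.+1) (gam *m E^t*) (- (1 - (ac (x N.+1))^*)^-1 *: (dv (x N.+1))^t*).
rewrite -/d -hM -hRf => /(_ Mu Me Ru Re) hg.
have hMR : M = Rf N.+1 by rewrite hM hRf hg.
rewrite /U refl_prodS -/(U N) -/E -hMR /M mulmxKtV //.
Qed.

End VI.

End PartC.

Section PartD.
Open Scope sesquilinear_scope.

Lemma tperm_val n (u v w : 'I_n) :
  val (tperm u v w) = if val w == val u then val v else if val w == val v then val u else val w.
Proof.
rewrite permE /=.
have e1 : (nat_of_ord w == nat_of_ord u) = (w == u) by [].
have e2 : (nat_of_ord w == nat_of_ord v) = (w == v) by [].
by rewrite e1 e2; case: (w == u); case: (w == v).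
Qed.

Lemma tau_val n j k (w : 'I_n) : (1 <= j <= n)%N -> (1 <= k <= n)%N ->
  val (tau n j k w) =
  if val w == j.-1 then k.-1 else if val w == k.-1 then j.-1 else val w.
Proof.
move=> /andP[j1 jn] /andP[k1 kn].
have hj : (j.-1 < n)%N by rewrite prednK.
have hk : (k.-1 < n)%N by rewrite prednK.
rewrite /tau (insubT (fun l => l < n)%N hj) (insubT (fun l => l < n)%N hk).
by rewrite tperm_val.
Qed.

Section Perm.
Context {R : realType}.
Local Notation C := (R[i]).

Lemma pmxE n (s : 'S_n) (a b : 'I_n) : (pmx n s : 'M[C]_n) a b = (val a == val (s b))%:R.
Proof. by rewrite mxE. Qed.

Lemma pmx1 n : (pmx n 1%g : 'M[C]_n) = 1%:M.
Proof. by apply/matrixP => a b; rewrite !mxE perm1. Qed.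

Lemma pmx_mul n (s t : 'S_n) : (pmx n s : 'M[C]_n) *m pmx n t = pmx n (t * s)%g.
Proof.
apply/matrixP => a b; rewrite !mxE (bigD1 (t b)) //= big1 ?addr0.
  by rewrite !mxE eqxx mulr1 permM.
by move=> c hc; rewrite !mxE (negbTE hc) mulr0.
Qed.

Lemma pmx_prod n (f : nat -> 'S_n) (l : seq nat) :
  (pmx n (\prod_(j <- l) f j)%g : 'M[C]_n) = \prod_(j <- rev l) pmx n (f j).
Proof.
elim: l => [|a l IH]; first by rewrite !big_nil pmx1.
by rewrite big_cons rev_cons big_rcons /= -IH -mulmxE pmx_mul.
Qed.

Lemma tperm_entry (A B J K : nat) :
  ((A == B)%:R - ((A == K)%:R - (A == J)%:R) * ((B == K)%:R - (B == J)%:R) : C)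
  = (A == (if B == J then K else if B == K then J else B))%:R.
Proof.
case: (eqVneq B J) => [->|hBJ].
  case: (eqVneq J K) => [<-|hJK].
    by rewrite !subrr mulr0 subr0.
  by rewrite ?mulr0n ?mulr1n; ring.
case: (eqVneq B K) => [->|hBK].
  by rewrite ?mulr0n ?mulr1n /=; ring.
by rewrite subrr mulr0 subr0.
Qed.

Lemma embed_pmx n j k : (1 <= k <= j)%N -> (j <= n)%N ->
  embed n j (pmx j (tau j j k) : 'M[C]_j) = pmx n (tau n j k).
Proof.
move=> /andP[k1 kj] jn.
have j1 : (1 <= j)%N := leq_trans k1 kj.
apply/matrixP => a b; rewrite embedE pmxE tau_val ?k1 ?j1 ?(leq_trans kj jn) //.
case: (boolP ((a < j) && (b < j))%N) => h.
  case/andP: h => ha hb; rewrite (mxnat_inn _ ha hb) pmxE /= tau_val ?k1 ?j1 ?leqnn //.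
rewrite mxnat_out //.
have hJ : (j.-1 < j)%N by rewrite prednK.
have hK : (k.-1 < j)%N by rewrite prednK // (leq_trans k1 kj).
case: (boolP (b < j)%N) => hb.
  have ha : ~~ (a < j)%N by rewrite hb andbT in h.
  have -> : (val a == val b) = false by apply: contraNF ha => /eqP ->.
  have hv : ((if val b == j.-1 then k.-1 else if val b == k.-1 then j.-1 else val b) < j)%N.
    by case: ifP => _ //; case: ifP.
  by rewrite (_ : (val a == _) = false) //; apply: contraNF ha => /eqP ->.
have -> : (val b == j.-1) = false by apply: contraNF hb => /eqP ->.
by have -> : (val b == k.-1) = false by apply: contraNF hb => /eqP ->.
Qed.


Lemma eqS_pred (a k : nat) : (0 < k)%N -> (a.+1 == k) = (a == k.-1).
Proof. by move=> hk; rewrite -[in LHS](prednK hk) eqSS. Qed.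

Lemma refl_evec j k : (1 <= k <= j)%N -> refl (evec j k : 'cV[C]_j) = pmx j (tau j j k).
Proof.
move=> /andP[k1 kj]; have j1 : (0 < j)%N := leq_trans k1 kj.
have hre : refl (evec j k : 'cV[C]_j) = 1%:M - dv (evec j k) *m (dv (evec j k))^t*.
  case: (eqVneq k j) => [->|hkj]; first by rewrite refl_xe // /dv subrr mul0mx subr0.
  have ha : ac (evec j k : 'cV[C]_j) = 0.
    rewrite /ac mxE big1 // => i _; rewrite !mxE conjC_nat.
    case: (i.+1 =P j) => [hi|_]; last by rewrite mul0r.
    by rewrite -hi in hkj; rewrite eq_sym (negbTE hkj) mulr0.
  by rewrite /refl ha conjC0 subr0 invr1 scale1r.
apply/matrixP => a b; rewrite hre pmxE tau_val ?k1 ?j1 ?leqnn //.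
rewrite !mxE big_ord1 !mxE rmorphB /= !conjC_nat !eqS_pred //.
by rewrite tperm_entry.
Qed.

End Perm.

End PartD.

Section PartE.
Close Scope ring_scope.

Lemma permnat_in n (s : 'S_n) (y : 'I_n) : permnat n s y = val (s y).
Proof.
by rewrite /permnat (insubT (fun k => k < n) (ltn_ord y)); congr (val (s _)); apply: val_inj.
Qed.

Lemma permnat_out n (s : 'S_n) (y : nat) : (n <= y) -> permnat n s y = y.
Proof.
move=> h; have hf : (y < n) = false by rewrite ltnNge h.
by rewrite /permnat (@insubF _ (fun k => k < n) (ordinal n) _ hf).
Qed.

Lemma permnat_lt n (s : 'S_n) y : y < n -> permnat n s y < n.
Proof. by move=> hy; rewrite -[y]/(val (Ordinal hy)) permnat_in ltn_ord. Qed.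

Lemma permnatM n (s t : 'S_n) y : permnat n (s * t)%g y = permnat n t (permnat n s y).
Proof.
case: (ltnP y n) => hy.
  by rewrite -[y]/(val (Ordinal hy)) !permnat_in permM.
by rewrite !permnat_out.
Qed.

Lemma permnat1 n y : permnat n 1%g y = y.
Proof.
case: (ltnP y n) => hy; last by rewrite permnat_out.
by rewrite -[y]/(val (Ordinal hy)) permnat_in perm1.
Qed.

Lemma tau_step n j k (y : 'I_n.+1) : 1 <= j <= n -> 1 <= k <= n ->
  val (tau n.+1 j k y) = permnat n (tau n j k) y.
Proof.
move=> /andP[j1 jn] /andP[k1 kn].
rewrite tau_val ?j1 ?k1 ?(leq_trans jn) ?(leq_trans kn) //.
case: (ltnP y n) => hy.
  have -> : permnat n (tau n j k) y = permnat n (tau n j k) (Ordinal hy) by [].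
  by rewrite permnat_in tau_val ?j1 ?k1.
rewrite permnat_out //.
have -> : (val y == j.-1) = false.
  by apply: contraTF hy => /eqP ->; rewrite -ltnNge prednK.
have -> : (val y == k.-1) = false.
  by apply: contraTF hy => /eqP ->; rewrite -ltnNge prednK.
by [].
Qed.

Lemma prod_step n (ix : nat -> nat) (l : seq nat) :
  (forall j, j \in l -> (1 <= j <= n) && (1 <= ix j <= n)) ->
  forall y : 'I_n.+1,
  val ((\prod_(j <- l) tau n.+1 j (ix j))%g y) = permnat n (\prod_(j <- l) tau n j (ix j))%g y.
Proof.
elim: l => [|a l IH] hl y.
  by rewrite !big_nil perm1 permnat1.
rewrite !big_cons permM permnatM.
have /andP[ha1 ha2] := hl a (mem_head a l).
rewrite IH; last by move=> j hj; apply: hl; rewrite in_cons hj orbT.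
by rewrite tau_step.
Qed.

Section VP.
Variable ix : nat -> nat.
Hypothesis hix : forall n, 1 <= n -> 1 <= ix n <= n.

Definition fp n := permnat n (sigma_of ix n).

Lemma fp_lt n y : y < n -> fp n y < n.
Proof. exact: permnat_lt. Qed.

Lemma fp_step n y : y <= n ->
  fp n.+1 y = if y == n then (ix n.+1).-1
              else if fp n y == (ix n.+1).-1 then n else fp n y.
Proof.
move=> hy.
rewrite /fp -[y]/(val (Ordinal (hy : y < n.+1))) permnat_in /sigma_of iota1S big_rcons /=.
rewrite permM tau_val ?leqnn ?hix //.
rewrite prod_step; last first.
  move=> j; rewrite mem_iota => /andP[j1 jn]; rewrite j1 /= -ltnS -(add1n n) jn /=.
  have /andP[-> h] := hix _ j1; exact: (leq_trans h).
rewrite /=.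
case: (ltnP y n) => hyn.
  have hf := @permnat_lt n (sigma_of ix n) y hyn.
  by rewrite (ltn_eqF hyn) (ltn_eqF hf).
have -> : y = n by apply/eqP; rewrite eqn_leq hy hyn.
by rewrite permnat_out // eqxx.
Qed.

Inductive Path (g : nat -> nat) (m : nat) : nat -> nat -> Prop :=
| PathB y : Path g m y (g y)
| PathS y z : m <= g y -> Path g m (g y) z -> Path g m y z.

Lemma Path_iter g m y z : Path g m y z ->
  exists t, [/\ 1 <= t, iter t g y = z & forall t', 1 <= t' -> t' < t -> m <= iter t' g y].
Proof.
elim=> {y z} [y|y z hm _ [t [t1 ht hlt]]].
  by exists 1; split=> // t' h1 h2; move: h1; rewrite leqNgt h2.
exists t.+1; split=> //; first by rewrite iterSr.
move=> [|t'] // _; rewrite ltnS => ht'.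
case: t' ht' => [|t'] ht'; first by [].
by rewrite iterSr hlt.
Qed.

Lemma Path_step n m y z : m <= n -> Path (fp n) m y z -> y < n -> Path (fp n.+1) m y z.
Proof.
move=> hmn; elim=> {y z} [y|y z hm _ IH] hy.
  have hyn : y <= n by apply: ltnW.
  case: (eqVneq (fp n y) (ix n.+1).-1) => hc.
    apply: PathS; first by rewrite fp_step // (ltn_eqF hy) hc eqxx.
    rewrite fp_step // (ltn_eqF hy) hc eqxx /=.
    have := PathB (fp n.+1) m n; rewrite fp_step // eqxx.
    by [].
  have e : fp n.+1 y = fp n y by rewrite fp_step // (ltn_eqF hy) (negbTE hc).
  by rewrite -e; apply: PathB.
have hf := fp_lt _ _ hy.
have hyn : y <= n by apply: ltnW.
case: (eqVneq (fp n y) (ix n.+1).-1) => hc.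
  apply: PathS; first by rewrite fp_step // (ltn_eqF hy) hc eqxx.
  rewrite fp_step // (ltn_eqF hy) hc eqxx /=.
  apply: PathS; first by rewrite fp_step // eqxx -hc.
  by rewrite fp_step // eqxx -hc; apply: IH.
apply: PathS; first by rewrite fp_step // (ltn_eqF hy) (negbTE hc).
by rewrite fp_step // (ltn_eqF hy) (negbTE hc); apply: IH.
Qed.

Lemma Path_all m n j : 1 <= m -> m <= n -> j < m -> Path (fp n) m j (fp m j).
Proof.
move=> m1; elim: n => [|n IH] hmn hj; first by move: (leq_trans m1 hmn).
case: (eqVneq m n.+1) => [->|hne]; first exact: PathB.
have hmn' : m <= n by rewrite -ltnS ltn_neqAle hne hmn.
apply: Path_step => //; first exact: IH.
exact: leq_trans hj hmn'.
Qed.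

Lemma vp_sigma : virtual_permutation (sigma_of ix).
Proof.
move=> n m m1 hmn j.
have [t [t1 ht hlt]] := @Path_iter _ _ _ _ (@Path_all m n j m1 hmn (ltn_ord j)).
exists t; split=> //.
by rewrite ht /fp permnat_in.
Qed.

End VP.

End PartE.

Section PartF.

Lemma spec_uniq {R : realType} {x : forall n : nat, 'cV[R[i]]_n} {j} {r : 'M[R[i]]_j} :
  (1 <= j)%N -> unit_sphere j (x j) -> refl_spec x j r -> r = refl (x j).
Proof.
move=> hj hxj [h1 h2].
case: (eqVneq (x j) (evec j j)) => he.
  by rewrite (refl_xe _ he) h1.
have [hr hre] := h2 (elimN eqP he).
exact: refl_uniq.
Qed.


End PartF.

Theorem proposition2p5 (R : realType) (x : forall n : nat, 'cV[R[i]]_n)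
  (hx : forall n : nat, (1 <= n)%N -> unit_sphere n (x n)) :
  exists u : forall n : nat, 'M[R[i]]_n,
    [/\ (* u is a virtual isometry with u_n(e_n) = x_n *)
        virtual_isometry u,
        (forall n : nat, (1 <= n)%N -> u n *m evec n n = x n),
        (* uniqueness *)
        (forall w : forall n : nat, 'M[R[i]]_n,
           virtual_isometry w ->
           (forall n : nat, (1 <= n)%N -> w n *m evec n n = x n) ->
           forall n : nat, (1 <= n)%N -> w n = u n),
        (* each r_j is well defined: Id if x_j = e_j, otherwise the unique
           reflection of C^j with r_j(e_j) = x_j *)
        ((forall j : nat, (1 <= j)%N -> exists! r : 'M[R[i]]_j, refl_spec x j r) /\
        (* u_n = r_n r_(n-1) ... r_1 *)
        (forall r : forall j : nat, 'M[R[i]]_j,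
           (forall j : nat, (1 <= j)%N -> refl_spec x j (r j)) ->
           forall n : nat, (1 <= n)%N -> u n = refl_prod r n))
      & (* the permutation case *)
        (forall ix : nat -> nat,
           (forall n : nat, (1 <= n)%N ->
              (1 <= ix n <= n)%N /\ x n = evec n (ix n)) ->
           virtual_permutation (sigma_of ix) /\
           forall n : nat, (1 <= n)%N -> u n = pmx n (sigma_of ix n))].
Proof.
exists (U x); split.
- split => n hn; [exact: U_unitary | exact: U_pi].
- exact: U_e.
- exact: U_unique.
- split.
    move=> j hj; exists (refl (x j)); split.
      exact: refl_spec_ok (hx j hj).
    by move=> r' hr'; rewrite (spec_uniq hj (hx j hj) hr').
  move=> r hr n hn; rewrite /U /refl_prod.
  apply: eq_big_seq => j; rewrite mem_rev mem_iota => /andP[j1 _].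
  by rewrite /Rf (spec_uniq j1 (hx j j1) (hr j j1)).
move=> ix hix.
have hix' : forall n, (1 <= n)%N -> (1 <= ix n <= n)%N by move=> n /hix [].
split; first exact: vp_sigma.
move=> n _; rewrite /U /refl_prod /sigma_of pmx_prod.
apply: eq_big_seq => j; rewrite mem_rev mem_iota => /andP[j1 jn].
have [hj hxj] := hix j j1.
by rewrite /Rf hxj refl_evec // embed_pmx // -ltnS -(add1n n).
Qed.
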